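(* Let $a\geq 3$ and $m\geq 2a^2-a+2$ be integers, and suppose $[C(m,a)]$ is colored with red and blue so that there is no monochromatic solution of $L(m,a)$ in $[C(m,a)]$, with both $a-2$ and $a-1$ red. Then all of $1,2,\dots,2a-2$ are red.
   Context: For integers $m\geq 3$, $a\geq 1$, $L(m,a)$ denotes the equation $x_1+x_2+\cdots+x_{m-1}=a x_m$. For a positive integer $n$, $[n]=\{1,\dots,n\}$. A solution of $L(m,a)$ in $[n]$ is an $m$-tuple $(x_1,\dots,x_m)\in[n]^m$ (entries not necessarily distinct) satisfying the equation; given a 2-coloring of $[n]$, it is monochromatic if all $x_i$ have the same color. $C(m,a)$ denotes $\left\lceil \frac{m-1}{a}\left\lceil \frac{m-1}{a}\right\rceil\right\rceil$. *)

(* Defs.v *)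
From mathcomp Require Import all_boot.
Set Implicit Arguments. Unset Strict Implicit. Unset Printing Implicit Defensive.

Definition ceil_div (p q : nat) : nat := (p + q - 1) %/ q.

(* C(m,a) = ceil((m-1)/a * ceil((m-1)/a)) = ceil((m-1)*ceil((m-1)/a) / a) *)
Definition Cma (m a : nat) : nat := ceil_div ((m - 1) * ceil_div (m - 1) a) a.

(* A solution of L(m,a) in [n]: an m-tuple (x_1,...,x_m), represented as
   x : nat -> nat with x_{k+1} = x k for k < m (values outside are ignored),
   entries in {1..n}, and x_1 + ... + x_{m-1} = a * x_m. *)
Definition is_solution (m a n : nat) (x : nat -> nat) : Prop :=
  (forall i, i < m -> 1 <= x i <= n) /\
  \sum_(0 <= i < m.-1) x i = a * x m.-1.

(* A 2-coloring of [n] is c : nat -> bool (only values on 1..n matter);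
   true = red, false = blue. *)
Definition monochromatic (m : nat) (c : nat -> bool) (x : nat -> nat) : Prop :=
  forall i j, i < m -> j < m -> c (x i) = c (x j).

Definition no_mono_solution (m a n : nat) (c : nat -> bool) : Prop :=
  forall x : nat -> nat, is_solution m a n x -> ~ monochromatic m c x.

(* Main.v *)
Require Import Defs.
From mathcomp Require Import all_boot.
From mathcomp Require Import zify.

Section Build.
Variables (m a n : nat) (c : nat -> bool).
Hypothesis Hno : no_mono_solution m a n c.

Definition PS (C : bool) (r T : nat) := exists f : nat -> nat,
  (forall i, i < r -> 1 <= f i <= n /\ c (f i) = C) /\ \sum_(0 <= i < r) f i = T.

Lemma PS0 C : PS C 0 0.
Proof. exists (fun _ => 0); split; [by [] | by rewrite big_geq]. Qed.

Lemma PScat C r1 r2 T1 T2 : PS C r1 T1 -> PS C r2 T2 -> PS C (r1 + r2) (T1 + T2).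
Proof.
move=> [f1 [H1 S1]] [f2 [H2 S2]].
exists (fun i => if i < r1 then f1 i else f2 (i - r1)); split.
- move=> i Hi; case: ifP => Hr; first exact: H1.
  apply: H2. move/negbT: Hr; rewrite -leqNgt => Hr; lia.
- rewrite (@big_cat_nat _ _ _ r1) ?leq_addr //= -S1 -S2; congr (_ + _).
  + by apply: eq_big_nat => i /andP[_ ->].
  + rewrite -{1}(add0n r1) big_addn. rewrite addKn.
    apply: eq_big_nat => i _. rewrite addnK.
    have -> : (i + r1 < r1) = false by apply/negbTE; rewrite -leqNgt leq_addl.
    by [].
Qed.

Lemma PSsingle C r v : 1 <= v <= n -> c v = C -> PS C r (r * v).
Proof.
move=> Hv Hc; exists (fun _ => v); split; first by [].
by rewrite sum_nat_const_nat subn0.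
Qed.

Lemma PSint C lo hi r T : 1 <= lo -> hi <= n ->
  (forall v, lo <= v <= hi -> c v = C) -> r * lo <= T <= r * hi -> PS C r T.
Proof.
move=> Hlo Hhi Hc; elim: r T => [|r IH] T HT.
  have -> : T = 0 by lia.
  exact: PS0.
pose v := if T - r * hi <= lo then lo else T - r * hi.
have Hv : lo <= v <= hi by move: HT; rewrite /v; case: ifP => H; nia.
have -> : T = (T - v) + 1 * v by move: Hv HT; rewrite /v; case: ifP => H; nia.
rewrite -addn1; apply: PScat; last first.
  apply: PSsingle; [lia | apply: Hc; exact Hv].
apply: IH; move: HT; rewrite /v; case: ifP => H; nia.
Qed.

Lemma PSfinal C w : 0 < m -> PS C m.-1 (a * w) -> 1 <= w <= n -> c w = C -> False.
Proof.
move=> Hm [f [Hf Hs]] Hw Hc.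
pose x := fun i => if i < m.-1 then f i else w.
have col : forall i, i < m -> c (x i) = C.
  by move=> i Hi; rewrite /x; case: ifP => H; [exact (Hf i H).2 | exact Hc].
apply: (Hno x).
- split.
  + by move=> i Hi; rewrite /x; case: ifP => H; [exact (Hf i H).1 | exact Hw].
  + rewrite /x ltnn -Hs; apply: eq_big_nat => i /andP[_ Hi]; by rewrite Hi.
- by move=> i j Hi Hj; rewrite (col i Hi) (col j Hj).
Qed.
End Build.

Lemma PSeq n c C r T r' T' : r = r' -> T = T' -> PS n c C r T -> PS n c C r' T'.
Proof. by move=> -> ->. Qed.

Lemma divfacts p d : 0 < d -> p = p %/ d * d + p %% d /\ p %% d < d.
Proof. move=> Hd; split; [exact: divn_eq | exact: ltn_pmod]. Qed.

Lemma n_big (a m : nat) : 3 <= a -> 2 * a ^ 2 - a + 2 <= m -> 2 * m.-1 <= Cma m a.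
Proof.
move=> Ha Hm; rewrite /Cma /ceil_div.
set k := m - 1.
have Hk : k = m.-1 by rewrite /k subn1.
rewrite -Hk.
set q := (k + a - 1) %/ a.
set n := (k * q + a - 1) %/ a.
have Ha0 : 0 < a by lia.
have [E1 R1] := divfacts (k + a - 1) a Ha0.
have [E2 R2] := divfacts (k * q + a - 1) a Ha0.
have Hk2 : 2 * a * a - a + 1 <= k by rewrite /k; move: Hm; rewrite expnS expn1; lia.
have Hq : 2 * a <= q.
  rewrite leqNgt; apply/negP => Hq.
  have : q * a <= (2 * a - 1) * a by apply: leq_mul; lia.
  nia.
have : k * (2 * a) <= n * a by nia.
nia.
Qed.

Set Implicit Arguments.
Unset Strict Implicit.

Lemma s_big a k s t : 3 <= a -> 2 * a * a - a + 1 <= k -> k = s * a + t -> t < a -> 2 * a - 1 <= s.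
Proof.
move=> Ha Hk E R; rewrite leqNgt; apply/negP => H.
have : s * a <= (2 * a - 2) * a by apply: leq_mul; lia.
nia.
Qed.

Lemma p1_Y a k s t : 3 <= a -> 2 * a * a - a + 1 <= k -> k = s * a + t -> t < a -> s + a + 1 <= k.
Proof.
move=> Ha Hk E R. have := s_big Ha Hk E R. have : 3 * s <= a * s by apply: leq_mul. nia.
Qed.

Lemma p1_y1 a k lo s t y1 : 3 <= a -> 2 * a * a - a + 1 <= k -> lo <= a - 2 ->
  k = s * a + t -> t < a -> k - s - a - 1 <= y1 -> k * lo <= a * y1.
Proof.
move=> Ha Hk Hlo E R Hy.
have HY := p1_Y Ha Hk E R.
have H1 : a * (k - s - a - 1) <= a * y1 by apply: leq_mul.
have H2 : k * lo <= k * (a - 2) by apply: leq_mul.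
nia.
Qed.

Lemma p1_y2 a k s t y2 : 3 <= a -> 2 * a * a - a + 1 <= k ->
  k = s * a + t -> t < a -> y2 <= k - s - 1 -> a * y2 <= k * (a - 1).
Proof.
move=> Ha Hk E R Hy.
have HY := p1_Y Ha Hk E R.
have H1 : a * y2 <= a * (k - s - 1) by apply: leq_mul.
nia.
Qed.

Lemma p1_x1 a k lo s t X : 3 <= a -> 2 * a * a - a + 1 <= k -> 2 <= lo -> lo <= a - 2 ->
  k = s * a + t -> t < a -> X <= (k - 2) * (lo - 1) + 2 * (k - s - a - 1) + a -> X <= k * (a - 1).
Proof.
move=> Ha Hk Hlo1 Hlo E R HX.
have HY := p1_Y Ha Hk E R.
have H2 : (k - 2) * (lo - 1) <= (k - 2) * (a - 3) by apply: leq_mul; lia.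
nia.
Qed.

Lemma p1_x2 a k lo s t X : 3 <= a -> 2 * a * a - a + 1 <= k -> 2 <= lo -> lo <= a - 2 ->
  k = s * a + t -> t < a -> (k - 2) * (lo - 1) + 2 * (k - s - a - 1) < X -> k * lo <= X.
Proof.
move=> Ha Hk Hlo1 Hlo E R HX.
have HY := p1_Y Ha Hk E R. have Hs := s_big Ha Hk E R.
have H3 : (a - 2) * (2 * a - 1) <= (a - 2) * s by apply: leq_mul.
rewrite !mulnBl !mulnBr in H3.
have H6 : 2 * lo <= k * lo by apply: leq_mul; lia.
have H7 : k <= k * lo by apply: leq_pmulr; lia.
have H5 : (k - 2) * (lo - 1) = k * lo - k - 2 * lo + 2.
  have Hk4 : 4 <= k.
    have : 3 * 3 <= a * a by apply: leq_mul.
    lia.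
  have H9 : k + 2 * lo <= k * lo.
    have : 2 * (lo - 2) <= k * (lo - 2) by apply: leq_mul; lia.
    have : k * 2 <= k * lo by apply: leq_mul.
    rewrite !mulnBr; lia.
  rewrite mulnBr mulnBl mulnBl muln1. lia.
rewrite H5 in HX.
rewrite [s * a]mulnC in E.
have H8 : 2 * (a * s) = a * (2 * s) by rewrite mulnCA.
have H10 : 4 * (a - 1) <= a * (a - 1) by apply: leq_mul; lia.
rewrite !mulnBr !muln1 in H10.
lia.
Qed.

Lemma p2_s a k s t : 3 <= a -> 2 * a * a - a + 1 <= k -> k = s * (a - 1) + t -> t < a - 1 ->
  2 * s <= k /\ a + 2 + s <= k.
Proof.
move=> Ha Hk E R.
have H1 : s * 2 <= s * (a - 1) by apply: leq_mul; lia.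
have : 3 * 3 <= a * a by apply: leq_mul.
lia.
Qed.

Lemma p2_y a k s t y : 3 <= a -> 2 * a * a - a + 1 <= k -> k = s * (a - 1) + t -> t < a - 1 ->
  s + 1 < y -> y <= s + 1 + a -> k - 1 <= (a - 1) * y /\ (a - 1) * y <= (k - 1) * (a - 1).
Proof.
move=> Ha Hk E R Hy1 Hy2.
have [S1 S2] := p2_s Ha Hk E R.
have H1 : (a - 1) * (s + 2) <= (a - 1) * y by apply: leq_mul => //; lia.
have H2 : (a - 1) * y <= (a - 1) * (k - 1) by apply: leq_mul => //; lia.
rewrite [(k - 1) * _]mulnC; split => //.
rewrite mulnDr [(a - 1) * s]mulnC in H1. lia.
Qed.

Lemma p2_x1 a k i x : 3 <= a -> a <= i -> 2 <= k -> (k - 1) * i < a * x -> k - a + 1 <= x.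
Proof.
move=> Ha Hi Hk H.
have H1 : (k - 1) * a <= (k - 1) * i by apply: leq_mul.
rewrite leqNgt; apply/negP => Hx.
have H2 : a * x <= a * (k - 1) by apply: leq_mul; lia.
lia.
Qed.

Lemma p2_x2 a k i s t x : 3 <= a -> 2 * a * a - a + 1 <= k -> k = s * (a - 1) + t -> t < a - 1 ->
  i <= 2 * a - 2 -> a * x <= (k - 1) * i + s + 1 + a -> x <= 2 * (k - a + 1).
Proof.
move=> Ha Hk E R Hi H.
have [S1 S2] := p2_s Ha Hk E R.
have H1 : (k - 1) * i <= (k - 1) * (2 * a - 2) by apply: leq_mul.
suff : a * x <= a * (2 * (k - a + 1)) by rewrite leq_pmul2l //; lia.
have E1 : (k - 1) * (2 * a - 2) + 2 * k + 2 * a = 2 * (a * k) + 2.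
  have Hk1 : 1 <= k by lia.
  have Ha1 : 1 <= a by lia.
  clear -Hk1 Ha1.
  move: Hk1 Ha1; case: k => [//|k1]; case: a => [//|a1] _ _.
  have -> : k1.+1 - 1 = k1 by lia.
  have -> : 2 * a1.+1 - 2 = 2 * a1 by lia.
  nia.
have E2 : a * (2 * (k - a + 1)) + 2 * (a * a) = 2 * (a * k) + 2 * a.
  have Hka : a <= k by lia.
  clear -Hka.
  have E : k = a + (k - a) by lia.
  rewrite E. move: (k - a) => d.
  have -> : a + d - a + 1 = d + 1 by lia.
  nia.
lia.
Qed.

Lemma phase1 a m c lo : 3 <= a -> 2 * a ^ 2 - a + 2 <= m ->
  no_mono_solution m a (Cma m a) c -> 2 <= lo <= a - 2 ->
  (forall v, lo <= v <= a - 1 -> c v = true) -> c (lo - 1) = true.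
Proof.
move=> Ha Hm Hno /andP[Hlo1 Hlo2] Hred.
have Hn := n_big _ _ Ha Hm.
move: Hno Hn; set n := Cma m a => Hno Hn.
have Hm0 : 0 < m by (timeout 10 lia).
move: Hn; have Hk2 : 2 * a * a - a + 1 <= m.-1 by move: Hm; rewrite expnS expn1; (timeout 10 lia).
move: Hk2; set k := m.-1 => Hk2 Hn.
have Ha0 : 0 < a by (timeout 10 lia).
have Hak : a + 2 <= k.
  have H : 3 * a <= a * a by apply: leq_mul.
  move: Hk2; rewrite -mulnA => Hk2.
  clear -Hk2 H Ha; (timeout 10 lia).
have blue : forall w, 1 <= w -> k * lo <= a * w -> a * w <= k * (a - 1) -> c w = false.
  move=> w Hw1 Hw2 Hw3; case Hcw : (c w) => //; exfalso.
  apply: (@PSfinal _ _ _ _ Hno true w) => //.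
  - apply: (@PSint _ _ _ lo (a - 1)); [(timeout 10 lia) | (timeout 10 lia) | exact: Hred | by apply/andP; split].
  - apply/andP; split => //.
    have : a * w <= a * k by apply: leq_trans Hw3 _; rewrite [a * k]mulnC; apply: leq_mul => //; (timeout 10 lia).
    rewrite leq_mul2l; move/orP => [|]; (timeout 10 lia).
case Hci : (c (lo - 1)) => //; exfalso.
move: Hci; set i := lo - 1 => Hci.
have [Es Rs] := divfacts k a Ha0.
move: Es Rs; set s := k %/ a; set t := k %% a => Es Rs.
set Y := k - s - a - 1.
have [ED RD] := divfacts ((k - 2) * i + 2 * Y) a Ha0.
move: ED RD; set D := ((k - 2) * i + 2 * Y) %/ a; set rD := _ %% a => ED RD.
set x := D + 1.
have HaxE : a * x = D * a + a by rewrite /x mulnDr muln1 mulnC.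
have Hi : i = lo - 1 by [].
have HY := p1_Y Ha Hk2 Es Rs.
have HYd : Y = k - s - a - 1 by [].
clearbody Y x.
set T := a * x - (k - 2) * i.
have HT1 : 2 * Y < T by rewrite /T; clear -ED RD HaxE; (timeout 10 lia).
have HT2 : T <= 2 * Y + a by rewrite /T; clear -ED RD HaxE; (timeout 10 lia).
have [E1 R1] := divfacts T 2 isT.
move: E1 R1; set y1 := T %/ 2; set r1 := T %% 2 => E1 R1.
set y2 := T - y1.
have Hy1 : Y <= y1 by clear -HT1 E1 R1; (timeout 10 lia).
have Hy12 : y1 <= y2 by rewrite /y2; clear -E1 R1; (timeout 10 lia).
have Hy2 : y2 <= k - s - 1 by rewrite /y2; move: HT2 HY; rewrite HYd; clear -E1 R1 Ha; (timeout 10 lia).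
have B1 : k * lo <= a * y1 by apply: (p1_y1 Ha Hk2 Hlo2 Es Rs); rewrite -HYd; exact: Hy1.
have B2 : a * y2 <= k * (a - 1) by apply: (p1_y2 Ha Hk2 Es Rs).
have B1' : k * lo <= a * y2 by apply: (leq_trans B1); apply: leq_mul.
have B2' : a * y1 <= k * (a - 1) by apply: leq_trans B2; apply: leq_mul.
have X1 : a * x <= k * (a - 1).
  apply: (p1_x1 Ha Hk2 Hlo1 Hlo2 Es Rs); rewrite -/i -HYd; clear -ED RD HaxE; (timeout 10 lia).
have X2 : k * lo <= a * x.
  apply: (p1_x2 Ha Hk2 Hlo1 Hlo2 Es Rs); rewrite -/i -HYd; clear -ED RD HaxE; (timeout 10 lia).
have Hlo0 : 0 < lo by (timeout 10 lia).
have pos : forall w, k * lo <= a * w -> 1 <= w.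
  have H0 : 0 < k * lo by rewrite muln_gt0; apply/andP; split; clear -Hk2 Hlo0; (timeout 10 lia).
  move=> w; case: w => [|w] Hw //; rewrite muln0 in Hw; clear -H0 Hw; (timeout 10 lia).
have small : forall w, a * w <= k * (a - 1) -> w <= n.
  move=> w Hw.
  have : a * w <= a * k by apply: leq_trans Hw _; rewrite [a * k]mulnC; apply: leq_mul => //; (timeout 10 lia).
  rewrite leq_mul2l; move/orP => [H|H]; clear -Ha Hn H; (timeout 10 lia).
apply: (@PSfinal _ _ _ _ Hno false x) => //; last first.
- apply: blue => //; exact: pos.
- by apply/andP; split; [exact: pos | exact: small].
- apply: (@PSeq _ _ _ ((k - 2) + (1 + 1)) ((k - 2) * i + (1 * y1 + 1 * y2))).
  + rewrite /k; rewrite -/k; clear -Hak; (timeout 10 lia).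
  + rewrite /y2 /T !mul1n. clear -HaxE ED RD E1 R1; (timeout 10 lia).
  + apply: PScat; first (apply: PSsingle => //; apply/andP; split; clear -Hak Hlo1 Hlo2 Hn; rewrite /i; (timeout 10 lia)).
    apply: PScat; apply: PSsingle.
    * by apply/andP; split; [exact: pos | exact: small].
    * by apply: blue => //; exact: pos.
    * by apply/andP; split; [exact: pos | exact: small].
    * by apply: blue => //; exact: pos.
Qed.

Lemma phase2 a m c i : 3 <= a -> 2 * a ^ 2 - a + 2 <= m ->
  no_mono_solution m a (Cma m a) c ->
  (forall v, 1 <= v <= a - 1 -> c v = true) -> a <= i <= 2 * a - 2 -> c i = true.
Proof.
move=> Ha Hm Hno Hred /andP[Hi1 Hi2].
have Hn := n_big _ _ Ha Hm.
move: Hno Hn; set n := Cma m a => Hno Hn.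
have Hm0 : 0 < m by lia.
move: Hn; have Hk2 : 2 * a * a - a + 1 <= m.-1 by move: Hm; rewrite expnS expn1; lia.
move: Hk2; set k := m.-1 => Hk2 Hn.
have Ha0 : 0 < a by lia.
have Hak : a + 2 <= k.
  have H : 3 * a <= a * a by apply: leq_mul.
  move: Hk2; rewrite -mulnA => Hk2'.
  clear -Hk2' H Ha; lia.

have blue1 : forall w, 1 <= w -> k - 1 <= (a - 1) * w -> (a - 1) * w <= (k - 1) * (a - 1) -> c w = false.
  move=> w Hw1 Hw2 Hw3; case Hcw : (c w) => //; exfalso.
  have Hwk : w <= k - 1.
    move: Hw3; rewrite [(k - 1) * _]mulnC leq_mul2l; move/orP => [H|H]; clear -H Ha Hak; lia.
  apply: (@PSfinal _ _ _ _ Hno true w) => //.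
  - apply: (@PSeq _ _ _ (1 + (k - 1)) (1 * w + (a - 1) * w)).
    + clear -Hak; lia.
    + rewrite -mulnDl; congr (_ * _); clear -Ha; lia.
    + apply: PScat.
      * apply: PSsingle => //; apply/andP; split => //; clear -Hwk Hn; lia.
      * apply: (@PSint _ _ _ 1 (a - 1)); [by [] | clear -Hak Hn; lia | exact: Hred |].
        rewrite muln1; apply/andP; split => //; by rewrite mulnC.
  - apply/andP; split => //; clear -Hwk Hn; lia.
have blue2 : forall w, k - a + 1 <= w -> w <= (k - a + 1) * (a - 1) -> w <= n -> c w = false.
  move=> w Hw1 Hw2 Hw3; case Hcw : (c w) => //; exfalso.
  apply: (@PSfinal _ _ _ _ Hno true w) => //.
  - apply: (@PSeq _ _ _ ((a - 1) + (k - a + 1)) ((a - 1) * w + w)).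
    + clear -Hak Ha; lia.
    + rewrite -{2}(mul1n w) -mulnDl; congr (_ * _); clear -Ha; lia.
    + apply: PScat.
      * apply: PSsingle => //; apply/andP; split => //; clear -Hw1 Hak; lia.
      * apply: (@PSint _ _ _ 1 (a - 1)); [by [] | clear -Hak Hn; lia | exact: Hred |].
        rewrite muln1; apply/andP; split => //.
  - apply/andP; split => //; clear -Hw1 Hak; lia.
case Hci : (c i) => //; exfalso.
have Ha1 : 0 < a - 1 by lia.
have [Es Rs] := divfacts k (a - 1) Ha1.
move: Es Rs; set s := k %/ (a - 1); set t := k %% (a - 1) => Es Rs.
clearbody s t.
have [ED RD] := divfacts ((k - 1) * i + (s + 1)) a Ha0.
move: ED RD; set D := _ %/ a; set rD := _ %% a => ED RD.
clearbody D rD.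
set x := D + 1.
have HaxE : a * x = D * a + a by rewrite /x mulnDr muln1 mulnC.
clearbody x.
set y := a * x - (k - 1) * i.
have Hy1 : s + 1 < y by rewrite /y; clear -ED RD HaxE; lia.
have Hy2 : y <= s + 1 + a by rewrite /y; clear -ED RD HaxE; lia.
have [Y1 Y2] := p2_y Ha Hk2 Es Rs Hy1 Hy2.
have Hx1 : (k - 1) * i < a * x by clear -ED RD HaxE; lia.
have Hx2 : a * x <= (k - 1) * i + s + 1 + a by clear -ED RD HaxE; lia.
have Hk22 : 2 <= k by clear -Hak; lia.
have X1 := p2_x1 Ha Hi1 Hk22 Hx1.
have X2 := p2_x2 Ha Hk2 Es Rs Hi2 Hx2.
have X3 : 2 * (k - a + 1) <= (k - a + 1) * (a - 1) by rewrite mulnC; apply: leq_mul => //; lia.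
have Hyk : y <= k - 1.
  move: Y2; rewrite [(k - 1) * _]mulnC leq_mul2l; move/orP => [H|H]; clear -H Ha Hak; lia.
apply: (@PSfinal _ _ _ _ Hno false x) => //.
- apply: (@PSeq _ _ _ ((k - 1) + 1) ((k - 1) * i + 1 * y)).
  + clear -Hak; lia.
  + rewrite mul1n /y; clear -Hx1; lia.
  + apply: PScat.
    * apply: PSsingle => //; apply/andP; split; clear -Hi1 Hi2 Hak Hn Ha; lia.
    * apply: PSsingle; first (apply/andP; split; clear -Hy1 Hyk Hn; lia).
      apply: blue1 => //; clear -Hy1; lia.
- apply/andP; split; clear -X1 X2 Hak Hn Ha; lia.
- apply: blue2 => //; [exact: leq_trans X2 X3 | clear -X1 X2 Hak Hn Ha; lia].
Qed.

Unset Implicit Arguments.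
Set Strict Implicit.
Theorem lemma8 (a m : nat) (c : nat -> bool) :
  3 <= a ->
  2 * a ^ 2 - a + 2 <= m ->
  no_mono_solution m a (Cma m a) c ->
  c (a - 2) = true -> c (a - 1) = true ->
  forall i, 1 <= i <= 2 * a - 2 -> c i = true.
Proof.
move=> Ha Hm Hno H2 H1.
have ind : forall d, d <= a - 3 -> forall v, a - 2 - d <= v <= a - 1 -> c v = true.
  elim=> [|d IH] Hd v Hv.
    have [->|->] : v = a - 2 \/ v = a - 1 by lia.
      exact: H2.
    exact: H1.
  have [Hv2|Hv2] := leqP (a - 2 - d) v.
    apply: IH; [lia | apply/andP; split => //; lia].
  have -> : v = (a - 2 - d) - 1 by lia.
  apply: (phase1 Ha Hm Hno); first (apply/andP; split; lia).
  move=> w Hw; apply: IH; [lia | exact Hw].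
have red : forall v, 1 <= v <= a - 1 -> c v = true.
  move=> v Hv; apply: (ind (a - 3)) => //; lia.
move=> i Hi.
have [Hia|Hia] := leqP i (a - 1).
  apply: red; lia.
apply: (phase2 Ha Hm Hno red); lia.
Qed.
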